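(* Let $\mathcal S=(\mathcal P,\mathcal L)$ be a linear space with $v$ points and constant line size $k$, $2<k<v$, and $b$ lines; let $G\le\mathrm{Aut}(\mathcal S)$ be transitive on lines, and let $\mathfrak C$ be a non-trivial $G$-invariant partition of $\mathcal P$ with $d$ classes of size $c$. If the permutation group $G^{\mathfrak C}$ induced by $G$ on $\mathfrak C$ contains the alternating group $\mathrm{Alt}_d$ on $\mathfrak C$, then $\mathrm{lcm}_{i=1}^{k}\binom{d}{d_i}$ divides $b$.
   Context: A linear space: a finite set $\mathcal P$ of points and a set $\mathcal L$ of subsets (lines) such that any two distinct points lie on exactly one line and each line has at least two points. For a line $\lambda$ and $0\le i\le k$, $d_i$ is the number of classes $C\in\mathfrak C$ with $|C\cap\lambda|=i$ (independent of $\lambda$ by line-transitivity). *)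

(* Defs.v *)
From mathcomp Require Import all_boot all_order all_fingroup.
Set Implicit Arguments. Unset Strict Implicit. Unset Printing Implicit Defensive.

(* Points: a finType T (so P = [set: T]); lines: L : {set {set T}}. *)

Definition linear_space (T : finType) (L : {set {set T}}) : Prop :=
  (forall x y : T, x != y ->
     exists l, [/\ l \in L, x \in l, y \in l &
                forall l', l' \in L -> x \in l' -> y \in l' -> l' = l])
  /\ (forall l, l \in L -> 2 <= #|l|).

Definition const_line_size (T : finType) (L : {set {set T}}) (k : nat) : Prop :=
  forall l, l \in L -> #|l| = k.

Definition automorphisms (T : finType) (L : {set {set T}}) (G : {group {perm T}}) : Prop :=
  forall g, g \in G -> forall l, l \in L -> [set g x | x in l] \in L.

Definition line_transitive (T : finType) (L : {set {set T}}) (G : {group {perm T}}) : Prop :=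
  forall l1 l2, l1 \in L -> l2 \in L -> exists2 g, g \in G & [set g x | x in l1] = l2.

Definition G_invariant_partition (T : finType) (G : {group {perm T}}) (C : {set {set T}}) : Prop :=
  partition C [set: T] /\
  (forall g, g \in G -> forall B, B \in C -> [set g x | x in B] \in C).

(* The group G^C induced by G on C contains Alt(C): every even permutation of
   the classes (a permutation of {set T} supported on C) is induced by some g in G. *)
Definition induced_contains_Alt (T : finType) (G : {group {perm T}}) (C : {set {set T}}) : Prop :=
  forall s : {perm {set T}}, perm_on C s -> ~~ odd_perm s ->
    exists2 g, g \in G & forall B, B \in C -> [set g x | x in B] = s B.

Definition d_i (T : finType) (C : {set {set T}}) (l : {set T}) (i : nat) : nat :=
  #|[set B in C | #|B :&: l| == i]|.

(* Main.v *)
Require Import Defs.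
From mathcomp Require Import all_boot all_order all_fingroup.
From mathcomp Require Import zify.
Set Implicit Arguments. Unset Strict Implicit. Unset Printing Implicit Defensive.

Lemma im_card (T : finType) (g : {perm T}) (B : {set T}) :
  #|[set g x | x in B]| = #|B|.
Proof. by rewrite card_imset //; apply: perm_inj. Qed.

Lemma im_I (T : finType) (g : {perm T}) (A B : {set T}) :
  [set g x | x in A :&: B] = [set g x | x in A] :&: [set g x | x in B].
Proof. by apply: imsetI => x y _ _; apply: perm_inj. Qed.

Lemma im_K (T : finType) (g : {perm T}) (B : {set T}) :
  [set g^-1%g x | x in [set g y | y in B]] = B.
Proof.
rewrite -imset_comp -[RHS]imset_id; apply: eq_imset => x /=; exact: permK.
Qed.

Lemma im_KV (T : finType) (g : {perm T}) (B : {set T}) :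
  [set g x | x in [set g^-1%g y | y in B]] = B.
Proof.
rewrite -imset_comp -[RHS]imset_id; apply: eq_imset => x /=; exact: permKV.
Qed.

Lemma im_1 (T : finType) (B : {set T}) : [set (1%g : {perm T}) x | x in B] = B.
Proof. rewrite -[RHS]imset_id; apply: eq_imset => x; exact: perm1. Qed.

Lemma perm_on_tp (X : finType) (C : {set X}) a b :
  a \in C -> b \in C -> perm_on C (tperm a b).
Proof.
move=> aC bC; apply: subset_trans (tperm_on a b) _.
by apply/subsetP => x; rewrite !inE => /orP [] /eqP ->.
Qed.

Lemma tp_fix (X : finType) (D : {set X}) x y :
  (x \in D) = (y \in D) -> [set tperm x y z | z in D] = D.
Proof.
move=> E; apply/eqP; rewrite eqEcard im_card leqnn andbT.
apply/subsetP => _ /imsetP [z zD ->].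
by case: tpermP => [zx|zy|//]; [rewrite -E -zx | rewrite E -zy].
Qed.

Lemma eq_of_sub (X : finType) (A B : {set X}) :
  A \subset B -> #|A| = #|B| -> A = B.
Proof. by move=> s c; apply/eqP; rewrite eqEcard s c leqnn. Qed.

Lemma perm_move (X : finType) (C D0 D : {set X}) :
  D0 \subset C -> D \subset C -> #|D0| = #|D| ->
  exists2 s : {perm X}, perm_on C s & [set s x | x in D0] = D.
Proof.
move: {2}#|D0 :\: D| (leqnn #|D0 :\: D|) => n; elim: n D0 => [|n IH] D0.
  rewrite leqn0 cards_eq0 setD_eq0 => sub _ _ Hc.
  by exists 1%g; [exact: perm_on1 | rewrite im_1; apply: eq_of_sub].
move=> Hn s0 s Hc.
case: (boolP (D0 \subset D)) => [sub|nsub].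
  by exists 1%g; [exact: perm_on1 | rewrite im_1; apply: eq_of_sub].
have [a aD0 aD] := subsetPn nsub.
have nsub2 : ~~ (D \subset D0).
  apply/negP => sub2; have E := eq_of_sub sub2 (esym Hc).
  by move: aD; rewrite E aD0.
have [b bD bD0] := subsetPn nsub2.
have aC : a \in C by apply: (subsetP s0).
have bC : b \in C by apply: (subsetP s).
set D1 := [set tperm a b x | x in D0].
have s1 : D1 \subset C.
  apply/subsetP => _ /imsetP [y yD0 ->].
  case: tpermP => // _ _; exact: (subsetP s0).
have c1 : #|D1| = #|D| by rewrite im_card.
have n1 : #|D1 :\: D| <= n.
  have sub3 : D1 :\: D \subset (D0 :\: D) :\ a.
    apply/subsetP => x; rewrite !inE => /andP [xD /imsetP [y yD0 E]].
    move: xD; rewrite E; case: tpermP => [ya|yb|ya yb].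
    - by rewrite bD.
    - by move: bD0; rewrite -yb yD0.
    - by move=> yD; rewrite yD yD0 /= andbT; apply/eqP.
  have := subset_leq_card sub3.
  move: Hn; rewrite (cardsD1 a (D0 :\: D)) !inE aD aD0 /=.
  by move=> h1 h2; apply: leq_trans h2 _; rewrite -ltnS.
have [s2 ps2 E2] := IH D1 n1 s1 s c1.
exists (tperm a b * s2)%g; first by apply: perm_onM => //; exact: perm_on_tp.
rewrite -E2 -imset_comp; apply: eq_imset => x /=; by rewrite permM.
Qed.

Lemma perm_move_even (X : finType) (C D0 D : {set X}) :
  2 < #|C| -> D0 \subset C -> D \subset C -> #|D0| = #|D| ->
  exists2 s : {perm X}, perm_on C s && ~~ odd_perm s & [set s x | x in D0] = D.
Proof.
move=> C3 s0 s Hc.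
have [t pt Et] := perm_move s0 s Hc.
case: (boolP (odd_perm t)) => [odd_t|ev]; last by exists t; rewrite ?pt.
have [x [y [xC yC xy Exy]]] : exists x y, [/\ x \in C, y \in C, x != y &
    (x \in D) = (y \in D)].
  have := cardsID D C; rewrite (setIidPr s) => HC.
  case: (ltnP 1 #|D|) => [/card_gt1P [x [y [xD yD xy]]]|D1].
    by exists x, y; split; rewrite ?xD ?yD //; apply: (subsetP s).
  have : 1 < #|C :\: D| by rewrite -HC in C3; move: C3 D1; clear; lia.
  move=> /card_gt1P [x [y [xD yD xy]]].
  move: xD yD; rewrite !inE => /andP [xD xC] /andP [yD yC].
  by exists x, y; split; rewrite // (negbTE xD) (negbTE yD).
exists (t * tperm x y)%g.
  by rewrite perm_onM ?perm_on_tp // odd_permM odd_t odd_tperm xy.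
by rewrite -[RHS](tp_fix Exy) -Et -imset_comp; apply: eq_imset => z /=; rewrite permM.
Qed.

Lemma sum_in (X : finType) (A : {set X}) (P : pred X) :
  \sum_(x in A) (P x : nat) = #|[set x in A | P x]|.
Proof.
rewrite -sum1_card big_mkcond /= [RHS]big_mkcond /=; apply: eq_bigr => x _.
by rewrite inE; case: (x \in A); case: (P x).
Qed.

Lemma lines_through (T : finType) (L : {set {set T}}) k p :
  linear_space L -> const_line_size L k ->
  #|[set l in L | p \in l]| * k.-1 = #|T|.-1.
Proof.
move=> [LS _] CK.
rewrite -(cardsC1 p) -[RHS]sum1_card.
have E : forall q, q \in [set~ p] -> 1 = \sum_(l in [set l in L | p \in l]) (q \in l : nat).
  move=> q; rewrite inE => qp; rewrite sum_in.
  have pq : p != q by move: qp; rewrite in_set1 eq_sym.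
  have [l0 [l0L pl0 ql0 U]] := LS p q pq.
  suff -> : [set x in [set l in L | p \in l] | q \in x] = [set l0] by rewrite cards1.
  apply/setP => l; rewrite !inE; apply/idP/idP.
    by move=> /andP [/andP [lL pl] ql]; apply/eqP; apply: U.
  by move=> /eqP ->; rewrite l0L pl0 ql0.
transitivity (\sum_(q in [set~ p]) \sum_(l in [set l in L | p \in l]) (q \in l : nat)); last first.
  by apply: eq_bigr => q qp; rewrite -E.
rewrite exchange_big /= -sum_nat_const; apply: eq_bigr => l.
rewrite inE => /andP [lL pl]; rewrite sum_in -(CK l lL) (cardsD1 p l) pl /=.
by rewrite add0n; apply: eq_card => x; rewrite !inE andbC.
Qed.

Lemma incid (T : finType) (L : {set {set T}}) (B : {set T}) :
  \sum_(p in B) #|[set l in L | p \in l]| = \sum_(l in L) #|B :&: l|.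
Proof.
transitivity (\sum_(p in B) \sum_(l in L) (p \in l : nat)).
  by apply: eq_bigr => p _; rewrite sum_in.
rewrite exchange_big; apply: eq_bigr => l _; rewrite sum_in.
by congr #|_|; apply/setP => x; rewrite !inE.
Qed.

Definition Fi (T : finType) (C : {set {set T}}) (i : nat) (l : {set T}) :=
  [set B in C | #|B :&: l| == i].
Definition fib (T : finType) (L C : {set {set T}}) i (D : {set {set T}}) :=
  [set l' in L | Fi C i l' == D].

Lemma F_im (T : finType) (G : {group {perm T}}) (C : {set {set T}}) i (g : {perm T}) (l : {set T}) :
  (forall g, g \in G -> forall B, B \in C -> [set g x | x in B] \in C) ->
  g \in G ->
  Fi C i [set g x | x in l] = [set [set g x | x in B] | B : {set T} in Fi C i l].
Proof.
move=> inv gG; apply/setP => B'; apply/idP/idP.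
  rewrite inE => /andP [B'C HB]; apply/imsetP.
  exists [set g^-1%g x | x in B']; last by rewrite im_KV.
  by rewrite inE inv ?groupV //= -(im_card g) im_I im_KV.
move=> /imsetP [B]; rewrite inE => /andP [BC HB] ->.
by rewrite inE inv //= -im_I im_card.
Qed.

Lemma fib_le (T : finType) (L : {set {set T}}) (G : {group {perm T}})
  (C : {set {set T}}) i (g : {perm T}) (D0 D : {set {set T}}) :
  automorphisms L G ->
  (forall g, g \in G -> forall B, B \in C -> [set g x | x in B] \in C) ->
  g \in G -> [set [set g x | x in B] | B : {set T} in D0] = D ->
  #|fib L C i D0| <= #|fib L C i D|.
Proof.
move=> aut inv gG HD.
rewrite -(card_imset (fib L C i D0) (imset_inj (@perm_inj _ g))).
apply: subset_leq_card; apply/subsetP => _ /imsetP [l' Hl' ->].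
move: Hl'; rewrite !inE => /andP [lL /eqP FE].
by rewrite aut //= (F_im i l' inv gG) FE HD.
Qed.

Lemma trans_sub (T : finType) (L : {set {set T}}) (k c : nat)
  (G : {group {perm T}}) (C : {set {set T}}) (l : {set T}) i
  (D : {set {set T}}) :
  linear_space L -> const_line_size L k -> 2 < k ->
  line_transitive L G -> G_invariant_partition G C ->
  (forall B, B \in C -> #|B| = c) -> c < #|T| ->
  induced_contains_Alt G C -> l \in L ->
  D \subset C -> #|D| = #|Fi C i l| ->
  exists2 g, g \in G & [set [set g x | x in B] | B : {set T} in Fi C i l] = D.
Proof.
move=> LS CK k2 LT [part inv] Cc cT Alt lL sD cD.
have sF : Fi C i l \subset C by apply/subsetP => B; rewrite inE => /andP [].
have C2 : 1 < #|C|.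
  have := card_partition part; rewrite cardsT.
  rewrite (eq_bigr (fun _ => c)) // sum_nat_const => HT.
  rewrite HT in cT; move: cT; case: #|C| => [|[|n]] //=; lia.
case: (ltnP 2 #|C|) => [C3 | C2'].
  have [s /andP [ps ev] Es] := perm_move_even C3 sF sD (esym cD).
  have [g gG Hg] := Alt s ps ev.
  exists g => //; rewrite -Es; apply: eq_in_imset => B BF; apply: Hg.
  exact: (subsetP sF).
have Ceq : #|C| = 2 by move: C2 C2'; clear; lia.
case: (eqVneq (Fi C i l) D) => [<-|neq].
  exists 1%g; first exact: group1.
  by rewrite -[RHS]imset_id; apply: eq_imset => B; exact: im_1.
have nsub : ~~ (Fi C i l \subset D).
  by apply/negP => s1; move: neq; rewrite (eq_of_sub s1 (esym cD)) eqxx.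
have nsub2 : ~~ (D \subset Fi C i l).
  by apply/negP => s1; move: neq; rewrite (eq_of_sub s1 cD) eqxx.
have [B1 B1F B1D] := subsetPn nsub.
have [B2 B2D B2F] := subsetPn nsub2.
have B1C : B1 \in C by apply: (subsetP sF).
have B2C : B2 \in C by apply: (subsetP sD).
have B12 : B1 != B2 by apply/eqP => E; move: B2F; rewrite -E B1F.
have CE : C = [set B1; B2].
  apply/esym/eq_of_sub; last by rewrite cards2 B12 Ceq.
  by apply/subsetP => B; rewrite !inE => /orP [] /eqP ->.
have F1 : Fi C i l = [set B1].
  apply/eqP; rewrite eqEsubset sub1set B1F andbT.
  apply/subsetP => B BF; have : B \in C by apply: (subsetP sF).
  rewrite CE !inE => /orP [//|/eqP E]; by move: B2F; rewrite -E BF.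
have D2 : D = [set B2].
  apply/eqP; rewrite eqEsubset sub1set B2D andbT.
  apply/subsetP => B BD; have : B \in C by apply: (subsetP sD).
  rewrite CE !inE => /orP [/eqP E|//]; by move: B1D; rewrite -E BD.
rewrite F1 D2.
suff [g gG Hg] : exists2 g, g \in G & [set g x | x in B1] = B2.
  by exists g => //; rewrite imset_set1 Hg.
case: (boolP [exists (g | g \in G), [set g x | x in B1] == B2]).
  by move=> /existsP [g /andP [gG /eqP E]]; exists g.
move=> H; exfalso.
have fix1 : forall g, g \in G -> [set g x | x in B1] = B1.
  move=> g gG; have := inv g gG B1 B1C; rewrite CE !inE => /orP [/eqP //|E].
  by move: H; rewrite negb_exists => /forallP /(_ g); rewrite gG E.
have fix2 : forall g, g \in G -> [set g x | x in B2] = B2.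
  move=> g gG; have := inv g gG B2 B2C; rewrite CE !inE => /orP [/eqP E|/eqP //].
  move: E; rewrite -(fix1 g gG) => /(imset_inj (@perm_inj _ g)) E.
  by move: B12; rewrite E eqxx.
have cnt : forall B, B \in C -> (forall g, g \in G -> [set g x | x in B] = B) ->
    #|L| * #|B :&: l| * k.-1 = c * #|T|.-1.
  move=> B BC fixB.
  have E1 : \sum_(p in B) #|[set l' in L | p \in l']| = #|L| * #|B :&: l|.
    rewrite incid -sum_nat_const; apply: eq_bigr => l' l'L.
    have [g gG gl] := LT l l' lL l'L.
    by rewrite -gl -{1}(fixB g gG) -im_I im_card.
  rewrite -E1 big_distrl /= -(Cc B BC) -sum_nat_const; apply: eq_bigr => p _.
  exact: lines_through.
have e := cnt B1 B1C fix1; rewrite -(cnt B2 B2C fix2) in e.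
have Lpos : 0 < #|L| by apply/card_gt0P; exists l.
have kpos : 0 < k.-1 by move: k2; clear; lia.
have : (#|L| * k.-1) * #|B1 :&: l| == (#|L| * k.-1) * #|B2 :&: l|.
  by apply/eqP; rewrite mulnAC e mulnAC.
rewrite eqn_pmul2l ?muln_gt0 ?Lpos ?kpos // => /eqP E.
move: B1F B2F; rewrite !inE B1C B2C /= E => -> //.
Qed.

Theorem lemma4p8 (T : finType) (L : {set {set T}}) (k c d : nat)
  (G : {group {perm T}}) (C : {set {set T}}) :
  linear_space L ->
  const_line_size L k ->
  2 < k -> k < #|T| ->
  automorphisms L G ->
  line_transitive L G ->
  G_invariant_partition G C ->
  (forall B, B \in C -> #|B| = c) ->
  #|C| = d ->
  1 < c -> c < #|T| ->
  induced_contains_Alt G C ->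
  forall l, l \in L ->
    (\big[lcmn/1%N]_(1 <= i < k.+1) 'C(d, d_i C l i)) %| #|L|.
Proof.
move=> LS CK k2 kT aut LT GP Cc Cd c1 cT Alt l lL.
have [part inv] := GP.
apply: (big_ind (fun x => x %| #|L|)); first exact: dvd1n.
  by move=> x y hx hy; rewrite dvdn_lcm hx hy.
move=> i _.
change (d_i C l i) with #|Fi C i l|.
set m := #|Fi C i l|.
set S := [set D : {set {set T}} | D \subset C & #|D| == m].
have key : #|L| = #|S| * #|fib L C i (Fi C i l)|.
  rewrite -sum1_card (partition_big (fun l' => Fi C i l') (mem S)) /=.
    rewrite -sum_nat_const; apply: eq_bigr => D; rewrite inE => /andP [sD /eqP cD].
    have [g gG Hg] := trans_sub LS CK k2 LT GP Cc cT Alt lL sD cD.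
    transitivity #|fib L C i D|.
      by rewrite -sum1_card; apply: eq_bigl => x; rewrite inE.
    apply/eqP; rewrite eqn_leq (fib_le i aut inv gG Hg) andbT.
    apply: (fib_le i aut inv (groupVr gG)).
    rewrite -Hg -imset_comp -[RHS]imset_id; apply: eq_imset => B /=; exact: im_K.
  move=> l' l'L; rewrite inE; apply/andP; split.
    by apply/subsetP => B; rewrite inE => /andP [].
  have [g gG gl] := LT l l' lL l'L.
  rewrite -gl (F_im i l inv gG) card_imset //; apply: imset_inj; exact: perm_inj.
by rewrite key cards_draws Cd dvdn_mulr.
Qed.
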